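(* Let $(\Omega,\mathcal A)$ be a measurable space. Suppose that to each non-empty compact set $L\subset\mathbb C^n$ is assigned a family $A(L)$ of continuous functions on $L$ such that whenever $Q\subset L$ is compact and $f\in A(L)$, then $f|_Q\in A(Q)$. Let $K$ be a uniformly separable random compact set in $\mathbb C^n$. Then $A_{[\Omega]}^{unif}(K)=A_{[\Omega]}(K)$.
   Context: A random compact set is a measurable map $K$ from $\Omega$ to the space of non-empty compact subsets of $\mathbb C^n$ with the Hausdorff distance and its Borel $\sigma$-algebra; it is uniformly separable if there is a countable $E\subset\mathbb C^n$ with $E\cap K(\omega)$ dense in $K(\omega)$ for all $\omega$. Let $\operatorname{Gr}K=\{(\omega,z)\in\Omega\times\mathbb C^n:z\in K(\omega)\}$ and $K^{-1}(z)=\{\omega:z\in K(\omega)\}$ (a measurable set). A generalized random function is $f:\operatorname{Gr}K\to\mathbb C$ such that for each $z$ with $K^{-1}(z)\ne\emptyset$, $f(\cdot,z):K^{-1}(z)\to\mathbb C$ is measurable. A generalized $A(K)$-random function is a generalized random function with $f(\omega,\cdot)\in A(K(\omega))$ for all $\omega$; generalized $C(K)$-random functions are those with $f(\omega,\cdot)$ continuous on $K(\omega)$ for all $\omega$. $A_{[\Omega]}(K)$ is the set of generalized $C(K)$-random functions $f$ for which there is a sequence of generalized $A(K)$-random functions $f_j$ with $f_j(\omega,\cdot)\to f(\omega,\cdot)$ uniformly on $K(\omega)$ for each $\omega$. $A_{[\Omega]}^{unif}(K)$ is the set of generalized $C(K)$-random functions $f$ for which there is a sequence of generalized $A(K)$-random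 functions $f_j$ with $f_j\to f$ uniformly on $\operatorname{Gr}K$. *)

(* Defs.v *)
From HB Require Import structures.
From mathcomp Require Import all_boot all_order all_algebra.
From mathcomp Require Import all_classical all_reals all_analysis.
From mathcomp Require Import complex.
Import Order.TTheory GRing.Theory Num.Theory.
Import numFieldNormedType.Exports.

Set Implicit Arguments.
Unset Strict Implicit.
Unset Printing Implicit Defensive.

Local Open Scope ring_scope.
Local Open Scope classical_set_scope.

Definition Cx (R : realType) : Type := R[i].
HB.instance Definition _ (R : realType) := Num.ClosedField.on (Cx R).
HB.instance Definition _ (R : realType) := NormedModule.copy (Cx R) (Cx R)^o.

(* C^n as row vectors; the norm on 'rV is the max of the complex moduli. *)
Notation Cn R n := 'rV[Cx R]_n.

Definition NKC (R : realType) (n : nat) : set (set (Cn R n)) :=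
  [set L | compact L /\ L !=set0].
Arguments NKC : clear implicits.

Definition nbhd_set (R : realType) (n : nat) (M : set (Cn R n)) (e : R) : set (Cn R n) :=
  [set z | exists2 y, M y & `|z - y| < ((e%:C)%C : Cx R)].

Definition hausdorff_dist (R : realType) (n : nat) (L M : set (Cn R n)) : \bar R :=
  ereal_inf [set e%:E | e in [set e : R | 0 < e /\
      L `<=` nbhd_set M e /\ M `<=` nbhd_set L e]].

Definition hausdorff_open (R : realType) (n : nat) (U : set (set (Cn R n))) : Prop :=
  U `<=` NKC R n /\
  forall L, U L -> exists2 e : R, 0 < e &
    forall M, NKC R n M -> (hausdorff_dist L M < e%:E)%E -> U M.

Definition random_compact_set (d : measure_display) (T : measurableType d)
  (R : realType) (n : nat) (K : T -> set (Cn R n)) : Prop :=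
  (forall w, NKC R n (K w)) /\
  forall B : set (set (Cn R n)), <<s NKC R n, hausdorff_open (n:=n) >> B ->
    measurable (K @^-1` B).

Definition uniformly_separable (d : measure_display) (T : measurableType d)
  (R : realType) (n : nat) (K : T -> set (Cn R n)) : Prop :=
  exists E : set (Cn R n), countable E /\
    forall w, K w `<=` closure (E `&` K w).

Definition Kinv (d : measure_display) (T : measurableType d)
  (R : realType) (n : nat) (K : T -> set (Cn R n)) (z : Cn R n) : set T :=
  [set w | K w z].

Definition borel_measurable_on (d : measure_display) (T : measurableType d)
  (U : topologicalType) (D : set T) (f : T -> U) : Prop :=
  forall B : set U, <<s open >> B -> measurable (D `&` f @^-1` B).

(* A function on Gr K is represented by f : T -> C^n -> C; only its values on
   Gr K matter in all definitions below. *)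
Definition gen_random_fun (d : measure_display) (T : measurableType d)
  (R : realType) (n : nat) (K : T -> set (Cn R n)) (f : T -> Cn R n -> Cx R) : Prop :=
  forall z, Kinv K z !=set0 -> borel_measurable_on (Kinv K z) (fun w => f w z).

(* A assigns to each compact L a family of functions on L, represented by
   (total) functions whose restrictions to L are the members of A(L). *)
Definition memA (R : realType) (n : nat) (A : set (Cn R n) -> set (Cn R n -> Cx R))
  (L : set (Cn R n)) (h : Cn R n -> Cx R) : Prop :=
  exists2 g, A L g & {in L, g =1 h}.

Definition gen_A_random_fun (d : measure_display) (T : measurableType d)
  (R : realType) (n : nat) (A : set (Cn R n) -> set (Cn R n -> Cx R))
  (K : T -> set (Cn R n)) (f : T -> Cn R n -> Cx R) : Prop :=
  gen_random_fun K f /\ forall w, memA A (K w) (f w).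

Definition gen_C_random_fun (d : measure_display) (T : measurableType d)
  (R : realType) (n : nat) (K : T -> set (Cn R n)) (f : T -> Cn R n -> Cx R) : Prop :=
  gen_random_fun K f /\ forall w, {within K w, continuous (f w)}.

Definition A_Omega (d : measure_display) (T : measurableType d)
  (R : realType) (n : nat) (A : set (Cn R n) -> set (Cn R n -> Cx R))
  (K : T -> set (Cn R n)) : set (T -> Cn R n -> Cx R) :=
  [set f | gen_C_random_fun K f /\
    exists fj : nat -> T -> Cn R n -> Cx R,
      (forall j, gen_A_random_fun A K (fj j)) /\
      forall w, forall e : R, 0 < e -> exists N : nat, forall j, (N <= j)%N ->
        forall z, K w z -> `|fj j w z - f w z| < ((e%:C)%C : Cx R)].

Definition A_Omega_unif (d : measure_display) (T : measurableType d)
  (R : realType) (n : nat) (A : set (Cn R n) -> set (Cn R n -> Cx R))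
  (K : T -> set (Cn R n)) : set (T -> Cn R n -> Cx R) :=
  [set f | gen_C_random_fun K f /\
    exists fj : nat -> T -> Cn R n -> Cx R,
      (forall j, gen_A_random_fun A K (fj j)) /\
      forall e : R, 0 < e -> exists N : nat, forall j, (N <= j)%N ->
        forall w z, K w z -> `|fj j w z - f w z| < ((e%:C)%C : Cx R)].

(* Main.v *)
Require Import Defs.
From HB Require Import structures.
From mathcomp Require Import all_boot all_order all_algebra.
From mathcomp Require Import all_classical all_reals all_analysis.
From mathcomp Require Import complex.
From mathcomp Require Import lra.
Import Order.TTheory GRing.Theory Num.Theory.
Import numFieldNormedType.Exports.
Local Open Scope ring_scope.
Local Open Scope classical_set_scope.
Definition rn (R : realType) (x : Cx R) : R := Num.sqrt (complex.Re (x : R[i]) ^+ 2 + complex.Im (x : R[i]) ^+ 2).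
Arguments rn {R}.

Lemma normCE (R : realType) (x : Cx R) : `|x| = (rn x)%:C%C.
Proof. by rewrite normc_def. Qed.

Lemma rn_le (R : realType) (x : Cx R) : rn x <= `|complex.Re (x : R[i])| + `|complex.Im (x : R[i])|.
Proof.
rewrite /rn.
rewrite -[X in _ <= X]ger0_norm ?addr_ge0 // -sqrtr_sqr.
rewrite ler_sqrt ?sqr_ge0 //.
rewrite sqrrD !real_normK ?num_real //.
by rewrite -addrA lerD2l lerDr mulrn_wge0 // mulr_ge0.
Qed.

Lemma rnD (R : realType) (x y : Cx R) : rn (x + y) <= rn x + rn y.
Proof.
rewrite -lecR (_ : (rn x + rn y)%:C%C = (rn x)%:C%C + (rn y)%:C%C) ?rmorphD //.
by rewrite -!normCE ler_normD.
Qed.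

Lemma approx (R : realType) (a : Cx R) (e : R) : 0 < e ->
  exists x y : rat, rn (a - (ratr x +i* ratr y)%C) < e.
Proof.
move=> e0; case: a => ra ia.
have e2 : 0 < e / 2 by rewrite divr_gt0.
have /rat_in_itvoo[x] : ra - e / 2 < ra by rewrite ltrBlDr ltrDl.
rewrite in_itv /= => /andP[hx1 hx2].
have /rat_in_itvoo[y] : ia - e / 2 < ia by rewrite ltrBlDr ltrDl.
rewrite in_itv /= => /andP[hy1 hy2].
exists x, y. have := rn_le _ (ra +i* ia - (ratr x +i* ratr y))%C.
move=> /le_lt_trans; apply => /=.
rewrite [e]splitr; apply: ltrD.
  rewrite ger0_norm ?subr_ge0 ?ltW //.
  by rewrite ltrBlDr -ltrBlDl.
rewrite ger0_norm ?subr_ge0 ?ltW //.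
by rewrite ltrBlDr -ltrBlDl.
Qed.

Lemma rCD (R : realType) (x y : R) : ((x + y)%:C%C : Cx R) = x%:C%C + y%:C%C.
Proof. by rewrite raddfD. Qed.

Lemma meas_dist d (T : measurableType d) (R : realType) (D : set T)
  (a b : T -> Cx R) (e : R) :
  (forall B : set (Cx R), open B -> measurable (D `&` a @^-1` B)) ->
  (forall B : set (Cx R), open B -> measurable (D `&` b @^-1` B)) ->
  measurable (D `&` [set w | `|a w - b w| < (e%:C)%C]).
Proof.
move=> ma mb.
pose q (t : rat * rat * rat) : Cx R := (ratr t.1.1 +i* ratr t.1.2)%C.
pose r (t : rat * rat * rat) : R := ratr t.2.
rewrite (_ : D `&` _ = \bigcup_(t : rat * rat * rat)
   ((D `&` a @^-1` ball (q t) (r t)%:C%C) `&`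
    (D `&` b @^-1` ball (q t) (e - r t)%:C%C))).
  apply: countable_bigcupT_measurable; first exact: countableP.
  by move=> t; apply: measurableI; [apply: ma|apply: mb]; apply: ball_open.
apply/seteqP; split.
- move=> w [Dw /= hab].
  rewrite normCE ltcR in hab.
  set nu := rn (a w - b w) in hab.
  have d0 : 0 < (e - nu) / 3 by rewrite divr_gt0 // subr_gt0.
  have [x [y hxy]] := approx _ (a w) _ d0.
  have /rat_in_itvoo[z] := hxy.
  rewrite in_itv /= => /andP[hz1 hz2].
  exists (x, y, z) => //; split; split => //; rewrite -ball_normE /ball_ /=.
    by rewrite distrC normCE ltcR.
  apply: le_lt_trans (ler_distD (a w) _ _) _.
  rewrite distrC !normCE -rCD ltcR.
  rewrite /r /= -/(q (x, y, z)) -/nu.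
  move: hz1 hz2; rewrite /q /=; set s := rn _; move: (ratr z) => zz; lra.
- move=> w [t _ [[Dw h1] [_ h2]]]; split => //=.
  move: h1 h2; rewrite -!ball_normE /ball_ /= => h1 h2.
  apply: le_lt_trans (ler_distD (q t) _ _) _.
  rewrite (_ : (e%:C)%C = (r t)%:C%C + (e - r t)%:C%C); last by rewrite -rCD subrKC.
  by apply: ltrD => //; rewrite distrC.
Qed.

Lemma countable_bigcap_meas d (T : measurableType d) (U : Type) (E : set U)
  (F : U -> set T) :
  countable E -> (forall z, E z -> measurable (F z)) ->
  measurable (\bigcap_(z in E) F z).
Proof.
move=> cE mF.
rewrite -[X in measurable X]setCK setC_bigcap; apply: measurableC.
have [->|/set0P[r Er]] := eqVneq E set0; first by rewrite bigcup_set0.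
move/countable_injP: cE => [f injf].
have -> : \bigcup_(z in E) ~` F z =
    \bigcup_(i in f @` E) ~` F ('pinv_(cst r) E f i).
  rewrite bigcup_image; apply: eq_bigcupr => z Ez.
  by rewrite pinvKV ?inE.
apply: bigcup_measurable => _ [z Ez <-].
by rewrite pinvKV ?inE //; apply/measurableC/mF.
Qed.

Lemma closure_bound (R : realType) (n : nat) (L Ed : set (Cn R n))
  (g h : Cn R n -> Cx R) (c : R) :
  L `<=` closure (Ed `&` L) ->
  {within L, continuous g} -> {within L, continuous h} ->
  (forall y, Ed y -> L y -> `|g y - h y| < (c%:C)%C) ->
  forall z, L z -> `|g z - h z| <= (c%:C)%C.
Proof.
move=> cl cg ch hb z Lz.
have cu := within_continuousB cg ch.
have uc := (subspace_continuousP L (g - h)).1 cu z Lz.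
apply/ler_addgt0Pr => eps eps0.
have := uc _ (nbhsx_ballx ((g - h) z) eps eps0).
rewrite /= nbhs_simpl /within /= => Hn.
have [y [[Edy Ly] Hy]] := cl z Lz _ Hn.
have := Hy Ly; rewrite -ball_normE /ball_ /= => Hy'.
rewrite -(subrKC (g y - h y) (g z - h z)).
apply: le_trans (ler_normD _ _) _.
apply: lerD; first by apply: ltW; apply: hb.
by apply: ltW; move: Hy'; rewrite /= distrC.

Qed.

Lemma small_inv (R : realType) (e : R) : 0 < e -> exists k : nat, (k.+1%:R)^-1 < e.
Proof.
move=> e0; exists (Num.truncn (e^-1)).
rewrite -[e]invrK ltf_pV2 ?posrE ?invr_gt0 //.
by rewrite invrK; exact: truncnS_gt.
Qed.

Theorem theorem7p4 (d : measure_display) (Omega : measurableType d)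
  (R : realType) (n : nat)
  (A : set 'rV[Cx R]_n -> set ('rV[Cx R]_n -> Cx R))
  (hAcont : forall L, NKC R n L -> forall g, A L g -> {within L, continuous g})
  (hArestr : forall L Q, NKC R n L -> NKC R n Q -> Q `<=` L ->
     forall g, A L g -> memA A Q g)
  (K : Omega -> set 'rV[Cx R]_n)
  (hK : random_compact_set K)
  (hsep : uniformly_separable K) :
  A_Omega_unif A K = A_Omega A K.
Proof.
apply/seteqP; split.
  move=> f [fC [fj [fjA hu]]]; split => //; exists fj; split => // w e e0.
  have [N HN] := hu e e0; exists N => j Nj z Kz; exact: HN.
move=> f [fC [fj [fjA hp]]]; split => //.
have [E [cE hE]] := hsep.
pose ek (k : nat) : R := (k.+1%:R)^-1.
have ek0 k : 0 < ek k by rewrite invr_gt0.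
pose Good k m w := forall j, (m <= j)%N -> forall z, E z -> K w z ->
  `|fj j w z - f w z| < ((ek k)%:C)%C.
have exG k w : exists m, `[< Good k m w >].
  have [N HN] := hp w _ (ek0 k).
  by exists N; apply/asboolP => j Nj z _ Kz; exact: HN.
pose Nk k w := ex_minn (exG k w).
have NkG k w : Good k (Nk k w) w.
  by rewrite /Nk; case: ex_minnP => m /asboolP.
have NkM k w m : Good k m w -> (Nk k w <= m)%N.
  by rewrite /Nk; case: ex_minnP => m' _ H G; apply: H; apply/asboolP.
have Gmono k m m' w : (m <= m')%N -> Good k m w -> Good k m' w.
  by move=> mm G j mj; apply: G; exact: leq_trans mm mj.
have cfj j w : {within K w, continuous (fj j w)}.
  have [g Ag eqg] := (fjA j).2 w.
  apply: (subspace_eq_continuous eqg).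
  exact: hAcont (hK.1 w) _ Ag.
have mKinv z : measurable (Kinv K z).
  case: (pselect (Kinv K z !=set0)) => [ne|e].
    have := fC.1 z ne setT (sub_sigma_algebra (openT : open setT)).
    by rewrite preimage_setT setIT.
  rewrite (_ : Kinv K z = set0) //; apply/seteqP; split => // w Kw.
  by apply: e; exists w.
have mopen (F : Omega -> 'rV[Cx R]_n -> Cx R) (hF : gen_random_fun K F) z
    (B : set (Cx R)) : open B -> measurable (Kinv K z `&` (fun w => F w z) @^-1` B).
  case: (pselect (Kinv K z !=set0)) => [ne|e] oB.
    by apply: hF ne B (sub_sigma_algebra oB).
  rewrite (_ : Kinv K z = set0) ?set0I //; apply/seteqP; split => // w Kw.
  by apply: e; exists w.
have mS k j z : measurable (~` Kinv K z `|`
    (Kinv K z `&` [set w | `|fj j w z - f w z| < ((ek k)%:C)%C])).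
  apply: measurableU; first exact: measurableC.
  by apply: meas_dist; apply: mopen; [exact: (fjA j).1|exact: fC.1].
have mG k m : measurable [set w | Good k m w].
  rewrite (_ : [set w | Good k m w] = \bigcap_(j in [set j | (m <= j)%N])
     \bigcap_(z in E) (~` Kinv K z `|`
        (Kinv K z `&` [set w | `|fj j w z - f w z| < ((ek k)%:C)%C]))).
    apply: bigcap_measurableType => j _.
    by apply: countable_bigcap_meas => // z _; apply: mS.
  apply/seteqP; split.
    move=> w G j /= mj z Ez; have [Kz|nKz] := pselect (K w z).
      by right; split => //; exact: G.
    by left.
  move=> w /= H j mj z Ez Kz; have := H j mj z Ez.
  by case => //= -[].
have mlev k m : measurable [set w | Nk k w = m].
  case: m => [|m].
    rewrite (_ : [set w | Nk k w = 0%N] = [set w | Good k 0 w]); first exact: mG.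
    apply/seteqP; split => w /=; first by move=> Ew; apply: (Gmono k (Nk k w) 0%N w (eq_leq Ew) (NkG k w)).
    by move=> G; apply/eqP; rewrite -leqn0; exact: NkM.
  rewrite (_ : [set w | Nk k w = m.+1] = [set w | Good k m.+1 w] `\` [set w | Good k m w]).
    by apply: measurableD.
  apply/seteqP; split => w /=.
    move=> Ew; split; first by rewrite -Ew; exact: NkG.
    by move=> G; have := NkM _ _ _ G; rewrite Ew ltnn.
  move=> [G nG]; apply/eqP; rewrite eqn_leq NkM //=.
  rewrite ltnNge; apply/negP => le; apply: nG; exact: Gmono le (NkG k w).
pose gk k w z := fj (Nk k w) w z.
exists gk; split.
  move=> k; split.
    move=> z ne B mB.
    rewrite (_ : Kinv K z `&` (fun w => gk k w z) @^-1` B = \bigcup_m ([set w | Nk k w = m] `&`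
        (Kinv K z `&` (fun w => fj m w z) @^-1` B))).
      apply: bigcupT_measurable => m; apply: measurableI; first exact: mlev.
      exact: (fjA m).1 z ne B mB.
    apply/seteqP; split => w /=.
      by move=> [Kw Bw]; exists (Nk k w).
    by move=> [m _ [<- [Kw Bw]]].
  by move=> w; exact: (fjA (Nk k w)).2 w.
move=> e e0.
have [k0 hk0] := small_inv _ _ e0.
exists k0 => k k0k w z Kz.
apply: le_lt_trans (@closure_bound R n (K w) E (fj (Nk k w) w) (f w) (ek k) (hE w) (cfj _ w) (fC.2 w) _ z Kz) _.
  by move=> y Ey Ky; exact: (NkG k w) (Nk k w) (leqnn _) y Ey Ky.
rewrite ltcR; apply: le_lt_trans hk0.
by rewrite /ek lef_pV2 ?posrE // ler_nat ltnS.
Qed.
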